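(* Let $y>0$ and $\mathscr{C}_n(y)=\displaystyle\int_0^y\frac{t\sinh t}{t^2+\pi^2n^2}\,dt$ for $n\in\mathbb{Z}$. Then the discrete Hilbert transform of $(\mathscr{C}_n(y))_{n\in\mathbb{Z}}$, i.e. the sequence $\frac{1}{\pi}\sum_{m\in\mathbb{Z}\setminus\{0\}}\frac{\mathscr{C}_{n-m}(y)}{m}$, is given by \[ \mathscr{D}_n(y)=\frac{1}{\pi n}\Bigl(\sinh y-\frac{y^2\sinh y}{y^2+\pi^2n^2}\Bigr)\quad(n\neq0),\qquad \mathscr{D}_0(y)=0. \] *)

(* Defs.v *)
From Stdlib Require Import Reals Lra ZArith.
From Coquelicot Require Import Coquelicot.
Open Scope R_scope.

Definition Cn (n : Z) (y : R) : R :=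
  RInt (fun t => t * sinh t / (t ^ 2 + PI ^ 2 * (IZR n) ^ 2)) 0 y.

Definition Dn (n : Z) (y : R) : R :=
  if Z.eqb n 0 then 0
  else / (PI * IZR n) * (sinh y - y ^ 2 * sinh y / (y ^ 2 + PI ^ 2 * (IZR n) ^ 2)).

(* the m-th pair of terms (m >= 1) of sum over m in Z\{0} of C_{n-m}(y)/m:
   C_{n-m}/m + C_{n+m}/(-m) *)
Definition hilb_pair (n : Z) (y : R) (m : nat) : R :=
  (Cn (n - Z.of_nat m) y - Cn (n + Z.of_nat m) y) / INR m.

Definition hilb_partial (n : Z) (y : R) (N : nat) : R :=
  / PI * sum_n_m (hilb_pair n y) 1 N.

(* Main.v *)
Require Import Defs.
From Stdlib Require Import Reals ZArith.
From Coquelicot Require Import Coquelicot.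
From Stdlib Require Import Lra Lia.
Open Scope R_scope.

Definition exRc := ex_RInt_continuous (V:=R_CompleteNormedModule).
Definition exRC1 := ex_RInt_Chasles_1 (V:=R_CompleteNormedModule).
Definition exRC2 := ex_RInt_Chasles_2 (V:=R_CompleteNormedModule).
Definition RIC := RInt_Chasles (V:=R_CompleteNormedModule).
Definition RIpl := RInt_plus (V:=R_CompleteNormedModule).
Definition RIcl := RInt_comp_lin (V:=R_CompleteNormedModule).
Definition exRcl := ex_RInt_comp_lin (V:=R_NormedModule).
Definition exRpl := ex_RInt_plus (V:=R_NormedModule).
Definition exRext := ex_RInt_ext (V:=R_NormedModule).

Lemma cont_pt_c (f : R -> R) x : continuity_pt f x -> continuous f x.
Proof. intros H; apply continuity_pt_filterlim; exact H. Qed.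

Lemma cont_sin_lin (lam x : R) : continuous (fun s => sin (lam * s)) x.
Proof. apply (ex_derive_continuous (K:=R_AbsRing) (V:=R_NormedModule)); auto_derive; auto. Qed.

Lemma RL (q : R -> R) (L : R) : 0 < L ->
  (forall s, 0 <= s <= L -> continuity_pt q s) ->
  forall eps, 0 < eps -> exists Lam, 0 < Lam /\ forall lam, Lam <= lam ->
  Rabs (RInt (fun s => q s * sin (lam * s)) 0 L) <= eps.
Proof.
  intros HL Hq eps Heps.
  assert (UC := Heine q (fun c => 0 <= c <= L) (compact_P3 0 L) Hq).
  destruct (UC (mkposreal (eps / L) ltac:(apply Rdiv_lt_0_compat; lra))) as [d0 Hd0].
  simpl in Hd0.
  destruct (continuity_ab_maj (fun s => Rabs (q s)) 0 L ltac:(lra)) as [Mx [HMx HMxr]].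
  { intros c Hc. apply continuity_pt_comp with (f1 := q) (f2 := Rabs); [apply Hq; auto|].
    apply Rcontinuity_abs. }
  set (B := Rabs (q Mx)).
  assert (HB0 : 0 <= B) by apply Rabs_pos.
  set (m := Rmin (d0 / 2) (Rmin L (eps / (2 * B + 1)))).
  assert (Hm0 : 0 < m).
  { unfold m. apply Rmin_glb_lt; [destruct d0; simpl; lra|].
    apply Rmin_glb_lt; [lra|]. apply Rdiv_lt_0_compat; lra. }
  exists (PI / m). split; [apply Rdiv_lt_0_compat; [apply PI_RGT_0|lra]|].
  intros lam Hlam.
  assert (Hlam0 : 0 < lam) by (eapply Rlt_le_trans; [|exact Hlam]; apply Rdiv_lt_0_compat; [apply PI_RGT_0|lra]).
  set (d := PI / lam).
  assert (Hd0p : 0 < d) by (apply Rdiv_lt_0_compat; [apply PI_RGT_0|lra]).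
  assert (Hdm : d <= m).
  { assert (HP : PI <= lam * m).
    { apply Rmult_le_compat_r with (r := m) in Hlam; [|lra].
      unfold Rdiv in Hlam. rewrite Rmult_assoc, Rinv_l in Hlam; lra. }
    unfold d. apply Rmult_le_reg_r with lam; [lra|].
    unfold Rdiv. rewrite Rmult_assoc, Rinv_l; lra. }
  assert (Hdd0 : d < d0) by (assert (m <= d0/2) by apply Rmin_l; destruct d0; simpl in *; lra).
  assert (HdL : d <= L) by (assert (m <= Rmin L (eps / (2 * B + 1))) by apply Rmin_r;
     assert (Rmin L (eps / (2 * B + 1)) <= L) by apply Rmin_l; lra).
  assert (Hde : d <= eps / (2 * B + 1)) by (assert (m <= Rmin L (eps / (2 * B + 1))) by apply Rmin_r;
     assert (Rmin L (eps / (2 * B + 1)) <= eps / (2 * B + 1)) by apply Rmin_r; lra).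
  set (g := fun s => q s * sin (lam * s)).
  set (g2 := fun x => - (q (x + d) * sin (lam * x))).
  assert (Hgg : forall x, g (x + d) = g2 x).
  { intro x. unfold g, g2. replace (lam * (x + d)) with (lam * x + PI) by (unfold d; field; lra).
    rewrite sin_plus, sin_PI, cos_PI. ring. }
  assert (Hcg : forall s, 0 <= s <= L -> continuous g s).
  { intros s Hs. unfold g. apply (continuous_mult q (fun s => sin (lam * s))).
    apply cont_pt_c, Hq; auto. apply cont_sin_lin. }
  assert (Eg : ex_RInt g 0 L).
  { apply exRc. intros z Hz. rewrite Rmin_left, Rmax_right in Hz by lra. apply Hcg; auto. }
  assert (Eg2 : ex_RInt g2 (-d) (L - d)).
  { assert (H := exRcl g 1 d (-d) (L - d)).
    replace (1 * - d + d) with 0 in H by ring. replace (1 * (L - d) + d) with L in H by ring.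
    specialize (H Eg). eapply exRext; [|exact H]. intros x _. simpl.
    rewrite <- Hgg. unfold scal; simpl; unfold mult; simpl. repeat rewrite Rmult_1_l. reflexivity. }
  assert (J1 : RInt g 0 L = RInt g2 (-d) (L - d)).
  { assert (H := RIcl g 1 d (-d) (L - d)).
    replace (1 * - d + d) with 0 in H by ring. replace (1 * (L - d) + d) with L in H by ring.
    rewrite <- (H Eg). apply RInt_ext. intros x _. rewrite <- Hgg.
    unfold scal; simpl; unfold mult; simpl. rewrite Rmult_1_l. f_equal. ring. }
  assert (C1 : RInt g 0 L = RInt g 0 (L - d) + RInt g (L - d) L).
  { symmetry. apply (RIC g 0 (L - d) L).
    apply exRC1 with L; [lra|auto]. apply exRC2 with 0; [lra|auto]. }
  assert (C2 : RInt g2 (-d) (L - d) = RInt g2 (-d) 0 + RInt g2 0 (L - d)).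
  { symmetry. apply (RIC g2 (-d) 0 (L - d)).
    apply exRC1 with (L - d); [lra|auto]. apply exRC2 with (-d); [lra|auto]. }
  assert (C3 : RInt g 0 (L - d) + RInt g2 0 (L - d) = RInt (fun x => g x + g2 x) 0 (L - d)).
  { symmetry. apply (RIpl g g2).
    apply exRC1 with L; [lra|auto]. apply exRC2 with (-d); [lra|auto]. }
  assert (B1 : Rabs (RInt (fun x => g x + g2 x) 0 (L - d)) <= ((L - d) - 0) * (eps / L)).
  { apply abs_RInt_le_const; [lra| |].
    apply exRpl. apply exRC1 with L; [lra|auto]. apply exRC2 with (-d); [lra|auto].
    intros x Hx. unfold g, g2.
    replace (q x * sin (lam * x) + - (q (x + d) * sin (lam * x))) with ((q x - q (x + d)) * sin (lam * x)) by ring.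
    rewrite Rabs_mult. replace (eps / L) with ((eps / L) * 1) by ring.
    apply Rmult_le_compat; try apply Rabs_pos. left. apply Hd0; try lra.
    replace (x - (x + d)) with (- d) by ring. rewrite Rabs_Ropp, Rabs_pos_eq; lra.
    apply Rabs_le, SIN_bound. }
  assert (Hqb : forall x, 0 <= x <= L -> Rabs (q x) <= B) by (intros; apply HMx; auto).
  assert (Hsb : forall x, Rabs (sin x) <= 1) by (intro x; apply Rabs_le; apply SIN_bound).
  assert (B2 : Rabs (RInt g (L - d) L) <= (L - (L - d)) * B).
  { apply abs_RInt_le_const; [lra|apply exRC2 with 0; [lra|auto]|].
    intros x Hx. unfold g. rewrite Rabs_mult. replace B with (B * 1) by ring.
    apply Rmult_le_compat; try apply Rabs_pos; auto. apply Hqb; lra. }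
  assert (B3 : Rabs (RInt g2 (-d) 0) <= (0 - - d) * B).
  { apply abs_RInt_le_const; [lra|apply exRC1 with (L - d); [lra|auto]|].
    intros x Hx. unfold g2. rewrite Rabs_Ropp, Rabs_mult. replace B with (B * 1) by ring.
    apply Rmult_le_compat; try apply Rabs_pos; auto. apply Hqb; lra. }
  assert (E2 : 2 * RInt g 0 L = RInt (fun x => g x + g2 x) 0 (L - d) + RInt g (L - d) L + RInt g2 (-d) 0).
  { rewrite <- C3. replace (2 * RInt g 0 L) with (RInt g 0 L + RInt g 0 L) by ring.
    rewrite C1 at 1. rewrite J1, C2. ring. }
  change (Rabs (RInt g 0 L) <= eps).
  assert (Hx1 : ((L - d) - 0) * (eps / L) <= eps).
  { replace (((L - d) - 0) * (eps / L)) with (eps - d * (eps / L)) by (field; lra).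
    assert (0 <= d * (eps / L)) by (apply Rmult_le_pos; [lra| left; apply Rdiv_lt_0_compat; lra]). lra. }
  assert (Hx2 : d * B * 2 <= eps).
  { apply Rle_trans with (eps / (2 * B + 1) * B * 2). apply Rmult_le_compat_r; [lra|]. apply Rmult_le_compat_r; lra.
    apply Rmult_le_reg_r with (2 * B + 1); [lra|]. unfold Rdiv.
    replace (eps * / (2 * B + 1) * B * 2 * (2 * B + 1)) with (eps * (2 * B) * ((2 * B + 1) * / (2 * B + 1))) by ring.
    rewrite Rinv_r by lra. nra. }
  assert (Rabs (2 * RInt g 0 L) <= 2 * eps).
  { rewrite E2. eapply Rle_trans; [apply Rabs_triang|].
    eapply Rle_trans; [apply Rplus_le_compat_r; apply Rabs_triang|]. lra. }
  rewrite Rabs_mult, (Rabs_pos_eq 2) in H by lra. lra.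
Qed.

Lemma quot_cont0 (f : R -> R) l : f 0 = 0 -> derivable_pt_lim f 0 l ->
  continuity_pt (fun s => if Req_EM_T s 0 then l else f s / s) 0.
Proof.
  intros H0 Hd eps Heps.
  destruct (Hd eps Heps) as [del Hdel].
  exists del. split; [apply cond_pos|].
  intros x [[_ Hx] Hxd]. simpl in *. unfold R_dist in *.
  destruct (Req_EM_T x 0) as [E|E]; [congruence|].
  destruct (Req_EM_T 0 0) as [_|E2]; [|congruence].
  specialize (Hdel x E). rewrite Rminus_0_r in Hxd. specialize (Hdel Hxd).
  rewrite Rplus_0_l, H0, Rminus_0_r in Hdel. exact Hdel.
Qed.

Lemma quot_contx (f : R -> R) l x : x <> 0 -> continuity_pt f x ->
  continuity_pt (fun s => if Req_EM_T s 0 then l else f s / s) x.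
Proof.
  intros Hx Hc.
  apply continuity_pt_locally_ext with (a := Rabs x) (f := fun s => f s / s).
  apply Rabs_pos_lt; auto.
  intros y Hy. destruct (Req_EM_T y 0) as [E|E]; auto.
  subst. unfold Rdist in Hy. rewrite Rminus_0_l, Rabs_Ropp in Hy. lra.
  apply continuity_pt_div; auto. apply continuity_pt_id.
Qed.

Lemma cosh_neg x : cosh (- x) = cosh x.
Proof. unfold cosh. rewrite Ropp_involutive. field. Qed.
Lemma sinh_neg x : sinh (- x) = - sinh x.
Proof. unfold sinh. rewrite Ropp_involutive. field. Qed.

Definition phi (t s : R) := cosh (t * (2 * s - 1)).
Definition hh (t s : R) := phi t s - cosh t.
Definition Fh (t s : R) := if Req_EM_T s 0 then (-2 * t * sinh t) else hh t s / s.
Definition Fs (s : R) := if Req_EM_T s 0 then PI else sin (PI * s) / s.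
Definition qq (t s : R) := Fh t s / Fs s.

Lemma is_derive_cosh_lin (a b x : R) : is_derive (fun s => cosh (a * s + b)) x (a * sinh (a * x + b)).
Proof. unfold cosh, sinh. auto_derive; auto. field. Qed.

Lemma hh_der (t : R) : derivable_pt_lim (hh t) 0 (-2 * t * sinh t).
Proof.
  apply is_derive_Reals. unfold hh, phi, cosh, sinh. auto_derive; auto.
  replace (t * (2 * 0 + - (1))) with (- t) by ring. rewrite Ropp_involutive. field.
Qed.

Lemma sin_der : derivable_pt_lim (fun s => sin (PI * s)) 0 PI.
Proof.
  apply is_derive_Reals. auto_derive; auto. rewrite Rmult_0_r, cos_0. ring.
Qed.

Lemma Fs_pos (s : R) : 0 <= s <= 1/2 -> 0 < Fs s.
Proof.
  intros Hs. unfold Fs. destruct (Req_EM_T s 0). apply PI_RGT_0.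
  apply Rdiv_lt_0_compat; [|lra]. apply sin_gt_0.
  apply Rmult_lt_0_compat; [apply PI_RGT_0|lra].
  assert (PI * s <= PI * (1/2)) by (apply Rmult_le_compat_l; [left; apply PI_RGT_0|lra]).
  assert (0 < PI) by apply PI_RGT_0. lra.
Qed.

Lemma qq_cont (t s : R) : 0 <= s <= 1/2 -> continuity_pt (qq t) s.
Proof.
  intros Hs. unfold qq. apply continuity_pt_div.
  - unfold Fh. destruct (Req_EM_T s 0) as [E|E].
    + subst. apply quot_cont0. unfold hh, phi. replace (t * (2 * 0 - 1)) with (- t) by ring.
      rewrite cosh_neg. ring. apply hh_der.
    + apply quot_contx; auto. apply derivable_continuous_pt.
      apply ex_derive_Reals_0. unfold hh, phi, cosh. auto_derive. auto.
  - unfold Fs. destruct (Req_EM_T s 0) as [E|E].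
    + subst. apply quot_cont0. rewrite Rmult_0_r; apply sin_0. apply sin_der.
    + apply quot_contx; auto. apply derivable_continuous_pt.
      apply ex_derive_Reals_0. auto_derive. auto.
  - apply Rgt_not_eq, Fs_pos; auto.
Qed.

Fixpoint S1 (f : nat -> R) (N : nat) : R :=
  match N with O => 0 | S N' => S1 f N' + f (S N') end.

Lemma S1_S f N : S1 f (S N) = S1 f N + f (S N).
Proof. reflexivity. Qed.
Lemma S1_0 f : S1 f 0 = 0.
Proof. reflexivity. Qed.

Definition DN (N : nat) (s : R) := 1 + 2 * S1 (fun k => cos (2 * PI * INR k * s)) N.

Lemma DN_sin N s : DN N s * sin (PI * s) = sin ((2 * INR N + 1) * PI * s).
Proof.
  induction N as [|N IH].
  - unfold DN; rewrite S1_0. replace ((2 * INR 0 + 1) * PI * s) with (PI * s) by (simpl; ring). ring.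
  - unfold DN in *; rewrite S1_S.
    replace ((1 + 2 * (S1 (fun k => cos (2 * PI * INR k * s)) N + cos (2 * PI * INR (S N) * s))) * sin (PI * s))
      with ((1 + 2 * S1 (fun k => cos (2 * PI * INR k * s)) N) * sin (PI * s) + 2 * cos (2 * PI * INR (S N) * s) * sin (PI * s)) by ring.
    rewrite IH. rewrite S_INR.
    set (x := 2 * PI * (INR N + 1) * s). set (y := PI * s).
    replace ((2 * INR N + 1) * PI * s) with (x - y) by (unfold x, y; ring).
    replace ((2 * (INR N + 1) + 1) * PI * s) with (x + y) by (unfold x, y; ring).
    rewrite sin_plus, sin_minus. ring.
Qed.

Definition FF (t c s : R) := (2 * t * sinh (t * (2 * s - 1)) * cos (c * s) + c * cosh (t * (2 * s - 1)) * sin (c * s)) / (4 * t ^ 2 + c ^ 2).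

Lemma int_phicos (t c : R) : 0 < t ->
  is_RInt (fun s => phi t s * cos (c * s)) 0 (1/2) (FF t c (1/2) - FF t c 0).
Proof.
  intros Ht.
  assert (Hd : 4 * t ^ 2 + c ^ 2 <> 0) by (apply Rgt_not_eq; nra).
  apply (is_RInt_derive (FF t c)).
  - intros x _. unfold FF, phi, sinh, cosh. auto_derive; auto. replace (t * (2 * x + - (1))) with (t * (2 * x - 1)) by ring. replace (4 * (t * (t * 1)) + c * (c * 1)) with (4 * t ^ 2 + c ^ 2) by ring. field. exact Hd.
  - intros x _. apply (ex_derive_continuous (K:=R_AbsRing) (V:=R_NormedModule)).
    unfold phi, cosh. auto_derive. auto.
Qed.

Lemma int_cos (c : R) : c <> 0 ->
  is_RInt (fun s => cos (c * s)) 0 (1/2) (sin (c * (1/2)) / c - sin (c * 0) / c).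
Proof.
  intros Hc.
  apply (is_RInt_derive (fun s => sin (c * s) / c)).
  - intros x _. auto_derive; auto. field. auto.
  - intros x _. apply (ex_derive_continuous (K:=R_AbsRing) (V:=R_NormedModule)).
    auto_derive. auto.
Qed.

Lemma sin_kPI k : sin (2 * PI * INR k * (1/2)) = 0.
Proof.
  apply sin_eq_0_1. exists (Z.of_nat k). rewrite <- INR_IZR_INZ. field.
Qed.

Definition TT (t : R) (N : nat) :=
  t * sinh t * (/ t ^ 2 + 2 * S1 (fun k => / (t ^ 2 + PI ^ 2 * (INR k) ^ 2)) N).

Lemma plusR (x y : R) : plus x y = x + y. Proof. reflexivity. Qed.
Lemma scalR (x y : R) : scal x y = x * y. Proof. reflexivity. Qed.
Lemma minusR (x y : R) : minus x y = x - y. Proof. reflexivity. Qed.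
Lemma oppR (x : R) : opp x = - x. Proof. reflexivity. Qed.

Lemma is_RInt_eqv (f : R -> R) (a b l l' : R) : is_RInt f a b l -> l = l' -> is_RInt f a b l'.
Proof. intros H E; subst; auto. Qed.

Lemma hk_int (t : R) (k : nat) : 0 < t -> (0 < k)%nat ->
  is_RInt (fun s => hh t s * cos (2 * PI * INR k * s)) 0 (1/2)
    (t * sinh t / (2 * (t ^ 2 + PI ^ 2 * (INR k) ^ 2))).
Proof.
  intros Ht Hk.
  assert (Hc : 2 * PI * INR k <> 0).
  { apply Rgt_not_eq. apply Rmult_lt_0_compat; [assert (0 < PI) by apply PI_RGT_0; lra|].
    apply lt_0_INR; auto. }
  eapply is_RInt_eqv.
  - eapply is_RInt_ext.
    2: { apply (is_RInt_minus (fun s => phi t s * cos (2 * PI * INR k * s))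
              (fun s => cosh t * cos (2 * PI * INR k * s))).
       apply int_phicos; auto.
       apply (is_RInt_scal (fun s => cos (2 * PI * INR k * s))). apply int_cos; auto. }
    intros x _. unfold hh, minus, plus, opp, scal; simpl. unfold mult; simpl. ring.
  - unfold minus, plus, opp, scal; simpl. unfold mult; simpl.
    unfold FF. rewrite !sin_kPI, !Rmult_0_r, sin_0, cos_0.
    replace (t * (2 * (1 / 2) - 1)) with 0 by field. rewrite sinh_0.
    replace (t * (0 - 1)) with (- t) by ring. rewrite sinh_neg.
    assert (0 < PI) by apply PI_RGT_0.
    assert (0 < INR k) by (apply lt_0_INR; auto).
    field. split; nra.
Qed.

Lemma h0_int (t : R) : 0 < t ->
  is_RInt (fun s => hh t s * DN 0 s) 0 (1/2) (t * sinh t / (2 * t ^ 2) - cosh t / 2).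
Proof.
  intros Ht.
  eapply is_RInt_eqv.
  - eapply is_RInt_ext.
    2: { apply (is_RInt_minus (fun s => phi t s * cos (0 * s)) (fun _ => cosh t)).
       apply int_phicos; auto. apply is_RInt_const. }
    intros x _. unfold hh, DN, minus, plus, opp, scal; simpl. unfold mult; simpl.
    rewrite Rmult_0_l, cos_0. ring.
  - unfold minus, plus, opp, scal; simpl. unfold mult; simpl.
    unfold FF. rewrite !Rmult_0_l, ?sin_0, ?cos_0.
    replace (t * (2 * (1 / 2) - 1)) with 0 by field. rewrite sinh_0.
    replace (t * (2 * 0 - 1)) with (- t) by ring. rewrite sinh_neg.
    field. lra.
Qed.

Lemma hD_int (t : R) (N : nat) : 0 < t ->
  is_RInt (fun s => hh t s * DN N s) 0 (1/2) ((TT t N - cosh t) / 2).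
Proof.
  intros Ht. induction N as [|N IH].
  - eapply is_RInt_eqv. apply h0_int; auto. unfold TT. rewrite S1_0. field; try lra.
  - assert (Hk := hk_int t (S N) Ht ltac:(lia)).
   
    assert (H2 := is_RInt_plus _ _ _ _ _ _ IH (is_RInt_scal _ _ _ 2 _ Hk)).
   
    eapply is_RInt_eqv.
    + eapply is_RInt_ext; [|exact H2].
      intros x _. unfold DN. rewrite S1_S. unfold plus, scal; simpl. unfold mult; simpl. ring.
    + rewrite plusR, scalR. unfold TT. rewrite S1_S. idtac "F".
      assert (0 < PI) by apply PI_RGT_0.
      assert (0 < INR (S N)) by (apply lt_0_INR; lia).
      assert (0 < t ^ 2 + PI ^ 2 * INR (S N) ^ 2) by (apply Rplus_lt_le_0_compat; [apply pow_lt; lra| apply Rmult_le_pos; apply pow_le; lra]).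
      field. split; lra.
Qed.

Lemma qq_eq t N s : 0 < s < 1/2 -> qq t s * sin ((2 * INR N + 1) * PI * s) = hh t s * DN N s.
Proof.
  intros Hs. rewrite <- DN_sin. unfold qq, Fh, Fs.
  destruct (Req_EM_T s 0) as [E|E]; [lra|].
  assert (0 < sin (PI * s)).
  { apply sin_gt_0. apply Rmult_lt_0_compat; [apply PI_RGT_0|lra].
    assert (PI * s <= PI * (1/2)) by (apply Rmult_le_compat_l; [left; apply PI_RGT_0|lra]).
    assert (0 < PI) by apply PI_RGT_0. lra. }
  field. split; lra.
Qed.

Lemma T_lim t : 0 < t -> is_lim_seq (TT t) (cosh t).
Proof.
  intros Ht. apply is_lim_seq_spec. intros eps.
  destruct (RL (qq t) (1/2) ltac:(lra) (qq_cont t) (eps / 4)) as [Lam [HL0 HL]].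
  { destruct eps; simpl; lra. }
  destruct (archimed (Rabs Lam)) as [Hup _].
  exists (Z.to_nat (up (Rabs Lam))). intros N HN.
  assert (HN' : Lam <= INR N).
  { apply le_INR in HN. rewrite INR_IZR_INZ, Z2Nat.id in HN.
    - assert (Lam <= Rabs Lam) by apply Rle_abs. lra.
    - apply le_IZR. assert (0 <= Rabs Lam) by apply Rabs_pos. lra. }
  assert (Hlam : Lam <= (2 * INR N + 1) * PI).
  { assert (1 < PI / 2) by apply PI2_1. assert (0 <= INR N) by apply pos_INR. nra. }
  specialize (HL _ Hlam).
  assert (E : RInt (fun s => qq t s * sin ((2 * INR N + 1) * PI * s)) 0 (1/2) = (TT t N - cosh t) / 2).
  { apply is_RInt_unique. eapply is_RInt_ext; [|apply hD_int; auto].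
    intros x Hx. rewrite Rmin_left, Rmax_right in Hx by lra. symmetry. apply qq_eq; auto. }
  rewrite E in HL. destruct eps as [e He]; simpl in *.
  replace (TT t N - cosh t) with (2 * ((TT t N - cosh t) / 2)) by field.
  rewrite Rabs_mult, Rabs_pos_eq by lra. lra.
Qed.

Lemma sinh_pos t : 0 < t -> 0 < sinh t.
Proof. intros; rewrite <- sinh_0; apply sinh_lt; auto. Qed.

Lemma Bk_pos t (x : R) : 0 < t -> 0 < t ^ 2 + PI ^ 2 * x ^ 2.
Proof. intros; apply Rplus_lt_le_0_compat; [apply pow_lt; lra| apply Rmult_le_pos; [apply pow_le; left; apply PI_RGT_0|]]. 
  rewrite <- Rsqr_pow2. apply Rle_0_sqr. Qed.

Lemma TT_diff t N j : 0 < t -> (1 <= N)%nat ->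
  0 <= TT t (N + j) - TT t N <= 2 * t * sinh t / PI ^ 2 * (/ INR N - / INR (N + j)).
Proof.
  intros Ht HN. assert (Hs := sinh_pos t Ht). assert (HP := PI_RGT_0).
  assert (HN0 : 0 < INR N) by (apply lt_0_INR; lia).
  induction j as [|j IH].
  - rewrite Nat.add_0_r. split; [lra|]. replace (/ INR N - / INR N) with 0 by ring. lra.
  - replace (N + S j)%nat with (S (N + j)) by lia.
    assert (E : TT t (S (N + j)) - TT t N = (TT t (N + j) - TT t N) + 2 * t * sinh t * / (t ^ 2 + PI ^ 2 * INR (S (N + j)) ^ 2)).
    { unfold TT. rewrite S1_S. ring. }
    rewrite E. assert (HB := Bk_pos t (INR (S (N + j))) Ht).
    assert (Hk : 0 < INR (N + j)) by (apply lt_0_INR; lia).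
    rewrite S_INR in *.
    assert (Hb : / (t ^ 2 + PI ^ 2 * (INR (N + j) + 1) ^ 2) <= / PI ^ 2 * (/ INR (N + j) - / (INR (N + j) + 1))).
    { replace (/ INR (N + j) - / (INR (N + j) + 1)) with (/ (INR (N + j) * (INR (N + j) + 1))) by (field; lra).
      rewrite <- Rinv_mult. apply Rinv_le_contravar. apply Rmult_lt_0_compat; [apply pow_lt; lra|nra].
      assert (0 < t ^ 2) by (apply pow_lt; lra). nra. }
    assert (0 <= 2 * t * sinh t * / (t ^ 2 + PI ^ 2 * (INR (N + j) + 1) ^ 2)).
    { apply Rmult_le_pos; [nra|left; apply Rinv_0_lt_compat; auto]. }
    split; [lra|].
    assert (2 * t * sinh t * / (t ^ 2 + PI ^ 2 * (INR (N + j) + 1) ^ 2) <= 2 * t * sinh t * (/ PI ^ 2 * (/ INR (N + j) - / (INR (N + j) + 1)))).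
    { apply Rmult_le_compat_l; [nra|auto]. }
    assert (E2 : 2 * t * sinh t / PI ^ 2 * (/ INR N - / (INR (N + j) + 1)) =
               2 * t * sinh t / PI ^ 2 * (/ INR N - / INR (N + j)) + 2 * t * sinh t * (/ PI ^ 2 * (/ INR (N + j) - / (INR (N + j) + 1)))).
    { field. repeat split; lra. }
    rewrite E2. lra.
Qed.

Lemma TT_tail t N : 0 < t -> (1 <= N)%nat ->
  0 <= cosh t - TT t N <= 2 * t * sinh t / (PI ^ 2 * INR N).
Proof.
  intros Ht HN. assert (Hs := sinh_pos t Ht). assert (HP := PI_RGT_0).
  assert (HN0 : 0 < INR N) by (apply lt_0_INR; lia).
  assert (HL : is_lim_seq (fun j => TT t (j + N)) (cosh t)).
  { apply (is_lim_seq_incr_n (TT t) N (cosh t)). apply T_lim; auto. }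
  split.
  - assert (H := is_lim_seq_le (fun _ => TT t N) (fun j => TT t (j + N)) (TT t N) (cosh t)).
    simpl in H. cut (TT t N <= cosh t); [lra|]. apply H.
    intros j. rewrite Nat.add_comm. generalize (TT_diff t N j Ht HN). lra.
    apply is_lim_seq_const. auto.
  - assert (H := is_lim_seq_le (fun j => TT t (j + N)) (fun _ => TT t N + 2 * t * sinh t / (PI ^ 2 * INR N)) (cosh t) (TT t N + 2 * t * sinh t / (PI ^ 2 * INR N))).
    simpl in H. cut (cosh t <= TT t N + 2 * t * sinh t / (PI ^ 2 * INR N)); [lra|]. apply H; auto.
    intros j. rewrite Nat.add_comm. generalize (TT_diff t N j Ht HN). intros [_ H2].
    assert (0 < INR (N + j)) by (apply lt_0_INR; lia).
    assert (0 <= 2 * t * sinh t / PI ^ 2 * / INR (N + j)).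
    { apply Rmult_le_pos; [|left; apply Rinv_0_lt_compat; auto]. apply Rmult_le_pos; [nra|left; apply Rinv_0_lt_compat; apply pow_lt; lra]. }
    replace (PI * (PI * 1)) with (PI ^ 2) by ring.
    replace (2 * t * sinh t / (PI ^ 2 * INR N)) with (2 * t * sinh t / PI ^ 2 * / INR N) by (field; lra).
    assert (2 * t * sinh t / PI ^ 2 * (/ INR N - / INR (N + j)) = 2 * t * sinh t / PI ^ 2 * / INR N - 2 * t * sinh t / PI ^ 2 * / INR (N + j)) by ring. lra.
    apply is_lim_seq_const.
Qed.

Ltac toR := match goal with |- ?a = ?b => change (@eq R a b) end.

Lemma arch_nat (x : R) : exists N : nat, x <= INR N.
Proof.
  destruct (archimed (Rabs x)) as [H _].
  exists (Z.to_nat (up (Rabs x))). rewrite INR_IZR_INZ, Z2Nat.id.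
  - assert (x <= Rabs x) by apply Rle_abs. lra.
  - apply le_IZR. assert (0 <= Rabs x) by apply Rabs_pos. lra.
Qed.

Lemma lim_bound (u : nat -> R) (l c : R) (N0 : nat) :
  (forall N, (N0 <= N)%nat -> Rabs (u N - l) <= c / (INR N + 1)) -> is_lim_seq u l.
Proof.
  intros H. apply is_lim_seq_spec. intros [eps He]. simpl.
  destruct (arch_nat (Rabs c / eps)) as [N1 HN1].
  exists (Nat.max N0 N1). intros N HN.
  eapply Rle_lt_trans. apply H; lia.
  assert (HN' : INR N1 <= INR N) by (apply le_INR; lia).
  assert (0 <= INR N1) by apply pos_INR.
  assert (Hp : 0 < INR N + 1) by lra.
  apply Rle_lt_trans with (Rabs c / (INR N + 1)).
  { unfold Rdiv. apply Rmult_le_compat_r. left; apply Rinv_0_lt_compat; lra. apply Rle_abs. }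
  apply (Rmult_lt_reg_r (INR N + 1)); auto. unfold Rdiv. rewrite Rmult_assoc, Rinv_l, Rmult_1_r by lra.
  assert (Rabs c <= eps * INR N1).
  { apply (Rmult_le_compat_l eps) in HN1; [|lra]. unfold Rdiv in HN1.
    rewrite <- Rmult_assoc, (Rmult_comm eps), Rmult_assoc, Rinv_r, Rmult_1_r in HN1 by lra. lra. }
  nra.
Qed.

Lemma tele_series : ex_series (fun k => / (INR k + 1) - / (INR k + 2)).
Proof.
  exists 1. 
  assert (E : forall N, sum_n (fun k => / (INR k + 1) - / (INR k + 2)) N = 1 - / (INR N + 2)).
  { induction N as [|N IH].
    - rewrite sum_O. toR. simpl. field.
    - rewrite sum_Sn, IH. rewrite plusR. toR. rewrite S_INR. field. split; apply Rgt_not_eq; assert (0 <= INR N) by apply pos_INR; lra. }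
  change (is_lim_seq (sum_n (fun k => / (INR k + 1) - / (INR k + 2))) 1).
  apply lim_bound with (c := 1) (N0 := 0%nat). intros N _. rewrite E.
  assert (0 <= INR N) by apply pos_INR.
  replace (1 - / (INR N + 2) - 1) with (- / (INR N + 2)) by ring.
  rewrite Rabs_Ropp, Rabs_pos_eq by (left; apply Rinv_0_lt_compat; lra).
  unfold Rdiv. rewrite Rmult_1_l. apply Rinv_le_contravar; lra.
Qed.

Definition fr (x t : R) := t * sinh t / (t ^ 2 + PI ^ 2 * x ^ 2).

Lemma Cn_fr j y : Cn j y = RInt (fr (IZR j)) 0 y.
Proof. reflexivity. Qed.

Lemma sinc_cont t : continuity_pt (fun s => if Req_EM_T s 0 then 1 else sinh s / s) t.
Proof.
  destruct (Req_EM_T t 0) as [E|E].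
  - subst. apply quot_cont0. apply sinh_0. rewrite <- cosh_0. apply derivable_pt_lim_sinh.
  - apply quot_contx; auto. apply derivable_continuous_pt. apply derivable_pt_sinh.
Qed.

Lemma fr_ex x y : 0 < y -> ex_RInt (fr x) 0 y.
Proof.
  intros Hy. destruct (Req_EM_T x 0) as [E|E].
  - subst. apply exRext with (fun s => if Req_EM_T s 0 then 1 else sinh s / s).
    + intros s Hs. rewrite Rmin_left, Rmax_right in Hs by lra.
      destruct (Req_EM_T s 0); [lra|]. unfold fr. toR. field. lra.
    + apply exRc. intros z _. apply cont_pt_c, sinc_cont.
  - apply exRc. intros z _. apply (ex_derive_continuous (K:=R_AbsRing) (V:=R_NormedModule)).
    unfold fr, sinh. auto_derive. 
    apply Rgt_not_eq. apply Rplus_le_lt_0_compat. 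
    replace (z * (z * 1)) with (z * z) by ring. apply Rle_0_sqr.
    replace (PI * (PI * 1) * (x * (x * 1))) with ((PI * x) * (PI * x)) by ring.
    assert (PI * x <> 0) by (apply Rmult_integral_contrapositive; split; auto; apply Rgt_not_eq, PI_RGT_0).
    destruct (Rle_0_sqr (PI * x)) as [Hq|Hq]; auto. exfalso; symmetry in Hq; apply Rsqr_0_uniq in Hq; auto.
Qed.

Lemma Cn_bound j y : 0 < y -> IZR j <> 0 ->
  Rabs (Cn j y) <= y * (y * sinh y / (PI ^ 2 * IZR j ^ 2)).
Proof.
  intros Hy Hj. rewrite Cn_fr.
  assert (HP := PI_RGT_0).
  assert (0 < IZR j ^ 2) by (rewrite <- Rsqr_pow2; apply Rlt_0_sqr; auto).
  assert (Hj2 : 0 < PI ^ 2 * IZR j ^ 2) by (apply Rmult_lt_0_compat; [apply pow_lt; lra|auto]).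
  replace (y * (y * sinh y / (PI ^ 2 * IZR j ^ 2))) with ((y - 0) * (y * sinh y / (PI ^ 2 * IZR j ^ 2))) by ring.
  apply abs_RInt_le_const; [lra|apply fr_ex; auto|].
  intros t Ht. unfold fr.
  assert (0 <= sinh t) by (destruct (Req_EM_T t 0); [subst; rewrite sinh_0; lra|left; apply sinh_pos; lra]).
  assert (sinh t <= sinh y) by (destruct (Req_EM_T t y); [subst; lra|left; apply sinh_lt; lra]).
  rewrite Rabs_pos_eq.
  - unfold Rdiv. apply Rmult_le_compat; try nra.
    left; apply Rinv_0_lt_compat. assert (0 <= t ^ 2) by (apply pow_le; lra). lra.
    apply Rinv_le_contravar; auto. assert (0 <= t ^ 2) by (apply pow_le; lra). lra.
  - apply Rmult_le_pos; [nra|]. left; apply Rinv_0_lt_compat. assert (0 <= t ^ 2) by (apply pow_le; lra). lra.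
Qed.

Lemma inv_sq_tele (z : R) : 0 <= z -> / (z + 1) ^ 2 <= 2 * (/ (z + 1) - / (z + 2)).
Proof.
  intros Hz.
  replace (2 * (/ (z + 1) - / (z + 2))) with (/ ((z + 1) * (z + 2) / 2)) by (field; lra).
  apply Rinv_le_contravar. apply Rdiv_lt_0_compat; nra. nra.
Qed.

Lemma abs_IZR_nat n : Rabs (IZR n) = INR (Z.abs_nat n).
Proof. rewrite INR_IZR_INZ, Zabs2Nat.id_abs, abs_IZR. reflexivity. Qed.

Lemma series_part (y : R) (n : Z) (sg : R) (jf : nat -> Z) : 0 < y -> (sg = 1 \/ sg = -1) ->
  (forall k, IZR (jf k) = IZR n + sg * INR (S k)) ->
  ex_series (fun k => Rabs (Cn (jf k) y / INR (S k))).
Proof.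
  intros Hy Hsg Hj.
  set (K0 := (2 * Z.abs_nat n)%nat).
  apply (ex_series_incr_n _ K0).
  set (c := 8 * (y * (y * sinh y)) / PI ^ 2).
  apply (ex_series_le (K:=R_AbsRing) (V:=R_CompleteNormedModule) _ (fun k => c * (/ (INR k + 1) - / (INR k + 2)))).
  2: { apply (ex_series_scal (K:=R_AbsRing) (V:=R_NormedModule) c (fun k => / (INR k + 1) - / (INR k + 2))). apply tele_series. }
  intros k. change (norm (Rabs (Cn (jf (K0 + k)%nat) y / INR (S (K0 + k)))))
    with (Rabs (Rabs (Cn (jf (K0 + k)%nat) y / INR (S (K0 + k))))).
  rewrite Rabs_Rabsolu.
  set (x := INR (S (K0 + k))).
  set (a := Rabs (IZR n)).
  assert (Ha : INR K0 = 2 * a) by (unfold K0, a; rewrite mult_INR, abs_IZR_nat; simpl; ring).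
  assert (Hk : 0 <= INR k) by apply pos_INR.
  assert (Ha0 : 0 <= a) by apply Rabs_pos.
  assert (Hx : x = 2 * a + INR k + 1) by (unfold x; rewrite S_INR, plus_INR, Ha; ring).
  assert (Hna : - a <= IZR n <= a).
  { unfold a; split; [apply Ropp_le_cancel; rewrite Ropp_involutive; rewrite <- Rabs_Ropp; apply Rle_abs | apply Rle_abs]. }
  set (jj := IZR (jf (K0 + k)%nat)).
  assert (Hjj : jj = IZR n + sg * x) by (unfold jj, x; apply Hj).
  assert (Hj2 : x ^ 2 / 4 <= jj ^ 2).
  { rewrite Hjj. destruct Hsg as [E|E]; rewrite E.
    - assert (x / 2 <= IZR n + 1 * x) by lra. assert (0 <= x / 2) by lra.
      replace (x ^ 2 / 4) with ((x / 2) * (x / 2)) by field. simpl. nra.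
    - assert (IZR n + -1 * x <= - (x / 2)) by lra. assert (0 <= x / 2) by lra.
      replace (x ^ 2 / 4) with ((x / 2) * (x / 2)) by field. simpl. nra. }
  assert (Hx1 : 1 <= x) by lra.
  assert (Hxk : INR k + 1 <= x) by lra.
  assert (Hjp : 0 < jj ^ 2) by (assert (0 < x ^ 2 / 4) by (apply Rdiv_lt_0_compat; [apply pow_lt|]; lra); lra).
  assert (Hjn : jj <> 0) by (intro E; rewrite E in Hjp; simpl in Hjp; lra).
  assert (HC := Cn_bound (jf (K0 + k)%nat) y Hy Hjn). fold jj in HC.
  assert (HP := PI_RGT_0).
  assert (Hsy : 0 < sinh y) by (apply sinh_pos; auto).
  assert (HB : y * (y * sinh y / (PI ^ 2 * jj ^ 2)) <= 4 * (y * (y * sinh y)) / PI ^ 2 * / (INR k + 1) ^ 2).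
  { replace (y * (y * sinh y / (PI ^ 2 * jj ^ 2))) with ((y * (y * sinh y)) / PI ^ 2 * / jj ^ 2) by (field; split; lra).
    replace (4 * (y * (y * sinh y)) / PI ^ 2 * / (INR k + 1) ^ 2) with ((y * (y * sinh y)) / PI ^ 2 * / ((INR k + 1) ^ 2 / 4)) by (field; split; lra).
    apply Rmult_le_compat_l. apply Rdiv_le_0_compat; [nra|apply pow_lt; lra].
    apply Rinv_le_contravar. apply Rdiv_lt_0_compat; [apply pow_lt|]; lra.
    apply Rle_trans with (x ^ 2 / 4); auto. unfold Rdiv. apply Rmult_le_compat_r; [lra|]. simpl. nra. }
  assert (HT := inv_sq_tele (INR k) Hk).
  unfold Rdiv at 1. rewrite Rabs_mult, Rabs_inv, (Rabs_pos_eq x) by lra.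
  apply Rle_trans with (Rabs (Cn (jf (K0 + k)%nat) y)).
  { rewrite <- (Rmult_1_r (Rabs _)) at 2. apply Rmult_le_compat_l; [apply Rabs_pos|].
    rewrite <- Rinv_1. apply Rinv_le_contravar; lra. }
  apply Rle_trans with (4 * (y * (y * sinh y)) / PI ^ 2 * / (INR k + 1) ^ 2); [lra|].
  unfold c. replace (8 * (y * (y * sinh y)) / PI ^ 2 * (/ (INR k + 1) - / (INR k + 2)))
    with (4 * (y * (y * sinh y)) / PI ^ 2 * (2 * (/ (INR k + 1) - / (INR k + 2)))) by (unfold Rdiv; ring).
  apply Rmult_le_compat_l; auto. apply Rdiv_le_0_compat; [nra|apply pow_lt; lra].
Qed.

Fixpoint S0 (f : nat -> R) (p : nat) : R :=
  match p with O => 0 | S p' => S0 f p' + f p' end.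

Lemma S0_ext f g p : (forall i, f i = g i) -> S0 f p = S0 g p.
Proof. intros H; induction p; simpl; auto. rewrite IHp, H; auto. Qed.

Lemma S0_plus f g p : S0 (fun i => f i + g i) p = S0 f p + S0 g p.
Proof. induction p; simpl; [ring|]. rewrite IHp; ring. Qed.

Lemma S0_tele (F : R -> R) p : S0 (fun i => F (INR i + 1) - F (INR i)) p = F (INR p) - F 0.
Proof.
  induction p as [|p IH]; simpl S0. simpl; ring.
  rewrite IH. rewrite S_INR. ring.
Qed.

Lemma S0_bound f p c : (forall i, (i < p)%nat -> 0 <= f i <= c) -> 0 <= S0 f p <= INR p * c.
Proof.
  induction p as [|p IH]; intros H; simpl S0. simpl; lra.
  assert (H1 := H p ltac:(lia)). assert (IH' := IH (fun i Hi => H i ltac:(lia))).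
  rewrite S_INR. lra.
Qed.

Definition bb (t x : R) := / (t ^ 2 + PI ^ 2 * x ^ 2).

Lemma bb_sq t x y : x ^ 2 = y ^ 2 -> bb t x = bb t y.
Proof. intros E; unfold bb; rewrite E; auto. Qed.

Definition Aa t n N x := (n + N + 1 + x) * bb t (N + 1 + x).
Definition Cc t n N x := (N - n - x) * bb t (N - x).
Definition RR t n p N := S0 (fun i => Aa t n N (INR i) + Cc t n N (INR i)) p.
Definition ww t n m := (2 * n - m) * bb t (n - m) + (2 * n + m) * bb t (n + m).

Lemma Aa_S t n N x : Aa t n (N + 1) x = Aa t n N (x + 1).
Proof. unfold Aa. rewrite (bb_sq t (N + 1 + 1 + x) (N + 1 + (x + 1))) by ring. ring. Qed.

Lemma Cc_S t n N x : Cc t n (N + 1) x = Cc t n N (x - 1).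
Proof. unfold Cc. rewrite (bb_sq t (N + 1 - x) (N - (x - 1))) by ring. ring. Qed.

Lemma RR_S t n p N : RR t n p (N + 1) = RR t n p N + (Aa t n N (INR p) - Aa t n N 0) + (Cc t n N (-1) - Cc t n N (INR p - 1)).
Proof.
  unfold RR.
  rewrite (S0_ext _ (fun i => ((Aa t n N (INR i + 1) - Aa t n N (INR i)) + (Cc t n N (INR i - 1) - Cc t n N (INR i))) + (Aa t n N (INR i) + Cc t n N (INR i)))).
  2: { intro i. rewrite Aa_S, Cc_S. ring. }
  rewrite S0_plus, S0_plus, S0_tele.
  rewrite (S0_ext _ (fun i => - ((fun x => Cc t n N (x - 1)) (INR i + 1) - (fun x => Cc t n N (x - 1)) (INR i)))).
  2: { intro i. simpl. replace (INR i + 1 - 1) with (INR i) by ring. ring. }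
  assert (Hn : forall (h : nat -> R) p, S0 (fun i => - h i) p = - S0 h p).
  { intros h q; induction q; simpl; [ring|]. rewrite IHq; ring. }
  rewrite Hn, (S0_tele (fun x => Cc t n N (x - 1)) p). simpl. replace (0 - 1) with (-1) by ring. ring.
Qed.

Lemma W_id t p N : S1 (fun m => ww t (INR p) (INR m)) N =
  INR p * (bb t 0 + 2 * S1 (fun k => bb t (INR k)) N) - 2 * INR p * bb t (INR p) + RR t (INR p) p (INR N).
Proof.
  induction N as [|N IH].
  - rewrite !S1_0. unfold RR.
    rewrite (S0_ext _ (fun i => (fun x => (INR p + x) * bb t x) (INR i + 1) - (fun x => (INR p + x) * bb t x) (INR i))).
    2: { intro i. unfold Aa, Cc. simpl.
         rewrite (bb_sq t (0 + 1 + INR i) (INR i + 1)) by ring.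
         rewrite (bb_sq t (0 - INR i) (INR i)) by ring. ring. }
    rewrite (S0_tele (fun x => (INR p + x) * bb t x) p). simpl. rewrite Rplus_0_r. ring.
  - rewrite !S1_S, IH. rewrite S_INR, RR_S.
    unfold ww, Aa, Cc.
    rewrite (bb_sq t (INR N + 1 + 0) (INR N + 1)) by ring.
    rewrite (bb_sq t (INR N - -1) (INR N + 1)) by ring.
    rewrite (bb_sq t (INR N + 1 + INR p) (INR p + (INR N + 1))) by ring.
    rewrite (bb_sq t (INR N - (INR p - 1)) (INR p - (INR N + 1))) by ring.
    ring.
Qed.

Lemma bb_pos t x : 0 < t -> 0 < bb t x.
Proof. intros; unfold bb; apply Rinv_0_lt_compat, Bk_pos; auto. Qed.

Lemma term_bound t a x L : 0 < t -> 0 < L <= x -> 0 <= a <= 2 * x -> 0 <= a * bb t x <= 2 / (PI ^ 2 * L).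
Proof.
  intros Ht HL Ha. assert (HP := PI_RGT_0). assert (Hb := bb_pos t x Ht).
  split; [apply Rmult_le_pos; lra|].
  assert (bb t x <= / (PI ^ 2 * x ^ 2)).
  { unfold bb. apply Rinv_le_contravar. apply Rmult_lt_0_compat; apply pow_lt; lra.
    assert (0 < t ^ 2) by (apply pow_lt; lra). lra. }
  apply Rle_trans with (2 * x * / (PI ^ 2 * x ^ 2)).
  { apply Rmult_le_compat; lra. }
  replace (2 * x * / (PI ^ 2 * x ^ 2)) with (2 / (PI ^ 2 * x)) by (field; lra).
  unfold Rdiv. apply Rmult_le_compat_l; [lra|]. apply Rinv_le_contravar.
  apply Rmult_lt_0_compat; [apply pow_lt|]; lra. apply Rmult_le_compat_l; [apply pow_le|]; lra.
Qed.

Lemma RR_bound t p N : 0 < t -> (1 <= p)%nat -> (2 * p <= N)%nat ->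
  0 <= RR t (INR p) p (INR N) <= INR p * (6 / (PI ^ 2 * INR N)).
Proof.
  intros Ht Hp HN. unfold RR. apply S0_bound. intros i Hi.
  assert (HP := PI_RGT_0).
  assert (Hi' : INR i + 1 <= INR p) by (rewrite <- S_INR; apply le_INR; lia).
  assert (HN' : 2 * INR p <= INR N) by (replace (2 * INR p) with (INR (2 * p)) by (rewrite mult_INR; simpl; ring); apply le_INR; lia).
  assert (0 <= INR i) by apply pos_INR.
  assert (Hp1 : 1 <= INR p) by (replace 1 with (INR 1) by reflexivity; apply le_INR; lia).
  assert (HA := term_bound t (INR p + INR N + 1 + INR i) (INR N + 1 + INR i) (INR N) Ht ltac:(lra) ltac:(lra)).
  assert (HC := term_bound t (INR N - INR p - INR i) (INR N - INR i) (INR N / 2) Ht ltac:(lra) ltac:(lra)).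
  unfold Aa, Cc.
  replace (6 / (PI ^ 2 * INR N)) with (2 / (PI ^ 2 * INR N) + 2 / (PI ^ 2 * (INR N / 2))) by (field; lra).
  lra.
Qed.

Lemma fr_pf t p m : 0 < t -> (1 <= m)%nat ->
  (fr (INR p - INR m) t - fr (INR p + INR m) t) / INR m = PI ^ 2 * t * sinh t * bb t (INR p) * ww t (INR p) (INR m).
Proof.
  intros Ht Hm. assert (HP := PI_RGT_0).
  assert (Hm' : 1 <= INR m) by (replace 1 with (INR 1) by reflexivity; apply le_INR; lia).
  unfold fr, ww, bb.
  assert (H1 := Bk_pos t (INR p - INR m) Ht). assert (H2 := Bk_pos t (INR p + INR m) Ht).
  assert (H3 := Bk_pos t (INR p) Ht).
  field. repeat split; lra.
Qed.

Lemma S1_ext f g N : (forall m, (1 <= m)%nat -> f m = g m) -> S1 f N = S1 g N.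
Proof. intros H; induction N; [reflexivity|]. rewrite !S1_S, IHN, H; auto; lia. Qed.

Lemma S1_scal c f N : S1 (fun m => c * f m) N = c * S1 f N.
Proof. induction N; [rewrite !S1_0; ring|]. rewrite !S1_S, IHN; ring. Qed.

Lemma sum_S1 f N : sum_n_m f 1 N = S1 f N.
Proof.
  induction N as [|N IH].
  - rewrite sum_n_m_zero by lia. reflexivity.
  - rewrite sum_n_Sm by lia. rewrite IH, S1_S. reflexivity.
Qed.

Definition PP p N t := S1 (fun m => (fr (INR p - INR m) t - fr (INR p + INR m) t) / INR m) N.
Definition gg p t := PI ^ 2 * INR p * bb t (INR p) * (cosh t - 2 * t * sinh t * bb t (INR p)).

Lemma PP_g t p N : 0 < t ->
  PP p N t - gg p t = PI ^ 2 * bb t (INR p) * (INR p * (TT t N - cosh t) + t * sinh t * RR t (INR p) p (INR N)).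
Proof.
  intros Ht. unfold PP.
  rewrite (S1_ext _ (fun m => (PI ^ 2 * t * sinh t * bb t (INR p)) * ww t (INR p) (INR m))).
  2: { intros m Hm. apply fr_pf; auto. }
  rewrite S1_scal, W_id. unfold gg, TT.
  replace (bb t 0) with (/ t ^ 2) by (unfold bb; f_equal; ring).
  change (S1 (fun k => / (t ^ 2 + PI ^ 2 * INR k ^ 2)) N) with (S1 (fun k => bb t (INR k)) N).
  ring.
Qed.

Lemma PP_bound t y p N : 0 < t <= y -> (1 <= p)%nat -> (2 * p <= N)%nat -> (1 <= N)%nat ->
  Rabs (PP p N t - gg p t) <= 8 * INR p * (y * sinh y) / INR N.
Proof.
  intros Ht Hp HN HN1. rewrite PP_g by lra.
  assert (HP := PI_RGT_0).
  assert (HNr : 0 < INR N) by (apply lt_0_INR; lia).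
  assert (Hpr : 1 <= INR p) by (replace 1 with (INR 1) by reflexivity; apply le_INR; lia).
  assert (Hs : 0 < sinh t) by (apply sinh_pos; lra).
  assert (Hsy : sinh t <= sinh y) by (destruct (Req_EM_T t y); [subst; lra|left; apply sinh_lt; lra]).
  assert (Hts : t * sinh t <= y * sinh y) by (apply Rmult_le_compat; lra).
  assert (HT := TT_tail t N ltac:(lra) HN1).
  assert (HR := RR_bound t p N ltac:(lra) Hp HN).
  assert (Hb := bb_pos t (INR p) ltac:(lra)).
  assert (Hb1 : PI ^ 2 * bb t (INR p) <= 1).
  { unfold bb. assert (0 < t ^ 2) by (apply pow_lt; lra).
    assert (0 < PI ^ 2) by (apply pow_lt; lra).
    assert (PI ^ 2 <= PI ^ 2 * INR p ^ 2) by (rewrite <- (Rmult_1_r (PI ^ 2)) at 1; apply Rmult_le_compat_l; [lra|]; simpl; nra).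
    apply (Rmult_le_reg_r (t ^ 2 + PI ^ 2 * INR p ^ 2)); [lra|].
    rewrite Rmult_assoc, Rinv_l, Rmult_1_l, Rmult_1_r by lra. lra. }
  set (X := INR p * (TT t N - cosh t) + t * sinh t * RR t (INR p) p (INR N)).
  assert (HX : Rabs X <= 8 * INR p * (y * sinh y) / INR N).
  { unfold X. 
    assert (A1 : Rabs (INR p * (TT t N - cosh t)) <= INR p * (2 * (y * sinh y) / INR N)).
    { rewrite Rabs_mult, Rabs_pos_eq by lra. apply Rmult_le_compat_l; [lra|].
      rewrite Rabs_minus_sym, Rabs_pos_eq by lra.
      apply Rle_trans with (2 * t * sinh t / (PI ^ 2 * INR N)); [lra|].
      replace (2 * t * sinh t / (PI ^ 2 * INR N)) with ((t * sinh t) * (2 / (PI ^ 2 * INR N))) by (field; lra).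
      replace (2 * (y * sinh y) / INR N) with ((y * sinh y) * (2 / INR N)) by (field; lra).
      assert (1 <= PI ^ 2) by (simpl; assert (1 < PI / 2) by apply PI2_1; nra).
      assert (Q1 : 0 <= 2 / (PI ^ 2 * INR N)) by (apply Rdiv_le_0_compat; [lra|]; apply Rmult_lt_0_compat; [apply pow_lt|]; lra).
      assert (Q2 : 2 / (PI ^ 2 * INR N) <= 2 / INR N).
      { unfold Rdiv. apply Rmult_le_compat_l; [lra|]. apply Rinv_le_contravar; [lra|]. nra. }
      apply Rmult_le_compat; nra. }
    assert (A2 : Rabs (t * sinh t * RR t (INR p) p (INR N)) <= (y * sinh y) * (INR p * (6 / INR N))).
    { assert (1 <= PI ^ 2) by (simpl; assert (1 < PI / 2) by apply PI2_1; nra).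
      assert (Q2 : 6 / (PI ^ 2 * INR N) <= 6 / INR N).
      { unfold Rdiv. apply Rmult_le_compat_l; [lra|]. apply Rinv_le_contravar; [lra|]. nra. }
      assert (Q3 : RR t (INR p) p (INR N) <= INR p * (6 / INR N)).
      { apply Rle_trans with (INR p * (6 / (PI ^ 2 * INR N))); [lra|]. apply Rmult_le_compat_l; lra. }
      rewrite Rabs_mult, !Rabs_pos_eq by nra. apply Rmult_le_compat; nra. }
    eapply Rle_trans; [apply Rabs_triang|].
    replace (8 * INR p * (y * sinh y) / INR N) with (INR p * (2 * (y * sinh y) / INR N) + (y * sinh y) * (INR p * (6 / INR N))) by (field; lra).
    lra. }
  rewrite Rabs_mult, (Rabs_pos_eq (PI ^ 2 * bb t (INR p))) by (apply Rmult_le_pos; [apply pow_le|]; lra).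
  apply Rle_trans with (1 * Rabs X); [apply Rmult_le_compat_r; [apply Rabs_pos|lra]|lra].
Qed.

Lemma RInt_div_minus (f g : R -> R) a b c : ex_RInt f a b -> ex_RInt g a b ->
  ex_RInt (fun t => (f t - g t) / c) a b /\ RInt (fun t => (f t - g t) / c) a b = (RInt f a b - RInt g a b) / c.
Proof.
  intros Hf Hg.
  assert (E : forall t, (f t - g t) / c = scal (/ c) (minus (f t) (g t))).
  { intro t. unfold scal, minus, plus, opp; simpl. unfold mult; simpl. unfold Rdiv; ring. }
  split.
  - eapply exRext. intros x _. symmetry. apply E.
    apply (ex_RInt_scal (V:=R_NormedModule)). apply (ex_RInt_minus (V:=R_NormedModule)); auto.
  - rewrite (RInt_ext _ (fun t => scal (/ c) (minus (f t) (g t)))) by (intros; apply E).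
    rewrite (RInt_scal (V:=R_CompleteNormedModule)) by (apply (ex_RInt_minus (V:=R_NormedModule)); auto).
    rewrite (RInt_minus (V:=R_CompleteNormedModule)) by auto.
    unfold scal, minus, plus, opp; simpl. unfold mult; simpl. unfold Rdiv; ring.
Qed.

Lemma RInt_S1 (F : nat -> R -> R) a b N : (forall m, ex_RInt (F m) a b) ->
  ex_RInt (fun t => S1 (fun m => F m t) N) a b /\
  RInt (fun t => S1 (fun m => F m t) N) a b = S1 (fun m => RInt (F m) a b) N.
Proof.
  intros HF. induction N as [|N [IH1 IH2]].
  - split.
    + eapply exRext; [|apply (ex_RInt_const (V:=R_NormedModule) a b 0)]. intros; rewrite S1_0; reflexivity.
    + rewrite S1_0. rewrite (RInt_ext _ (fun _ => 0)) by (intros; rewrite S1_0; reflexivity).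
      rewrite RInt_const. unfold scal; simpl. unfold mult; simpl. toR. ring.
  - split.
    + eapply exRext; [|apply (exRpl _ _ _ _ IH1 (HF (S N)))]. intros; rewrite S1_S; reflexivity.
    + rewrite S1_S, <- IH2. etransitivity; [|exact (RIpl _ _ _ _ IH1 (HF (S N)))].
      apply RInt_ext. intros; rewrite S1_S; reflexivity.
Qed.

Lemma hp_eq p N y : 0 < y -> sum_n_m (hilb_pair (Z.of_nat p) y) 1 N = RInt (PP p N) 0 y.
Proof.
  intros Hy. rewrite sum_S1. unfold PP.
  assert (HF : forall m, ex_RInt (fun t => (fr (INR p - INR m) t - fr (INR p + INR m) t) / INR m) 0 y).
  { intro m. apply RInt_div_minus; apply fr_ex; auto. }
  rewrite (proj2 (RInt_S1 (fun m t => (fr (INR p - INR m) t - fr (INR p + INR m) t) / INR m) 0 y N HF)).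
  apply S1_ext. intros m _. unfold hilb_pair. rewrite !Cn_fr.
  rewrite minus_IZR, plus_IZR, <- !INR_IZR_INZ.
  symmetry. apply RInt_div_minus; apply fr_ex; auto.
Qed.

Lemma gg_int p y : 0 < y -> (1 <= p)%nat ->
  is_RInt (gg p) 0 y (PI ^ 2 * INR p * sinh y * bb y (INR p)).
Proof.
  intros Hy Hp. assert (HP := PI_RGT_0).
  assert (Hpr : 1 <= INR p) by (replace 1 with (INR 1) by reflexivity; apply le_INR; lia).
  assert (Hd : forall t, t ^ 2 + PI ^ 2 * INR p ^ 2 <> 0).
  { intro t. apply Rgt_not_eq. assert (0 <= t ^ 2) by (rewrite <- Rsqr_pow2; apply Rle_0_sqr).
    assert (0 < PI ^ 2 * INR p ^ 2) by (apply Rmult_lt_0_compat; apply pow_lt; lra). lra. }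
  eapply is_RInt_eqv.
  - apply (is_RInt_derive (fun t => PI ^ 2 * INR p * sinh t * bb t (INR p))).
    + intros x _. unfold gg, bb, sinh, cosh. auto_derive.
      * specialize (Hd x). contradict Hd. rewrite <- Hd. ring.
      * specialize (Hd x). field. contradict Hd. rewrite <- Hd. ring.
    + intros x _. apply (ex_derive_continuous (K:=R_AbsRing) (V:=R_NormedModule)).
      unfold gg, bb, sinh, cosh. auto_derive.
      specialize (Hd x). repeat split; contradict Hd; rewrite <- Hd; ring.
  - rewrite minusR, sinh_0. ring.
Qed.

Lemma Dn_val p y : (1 <= p)%nat -> Dn (Z.of_nat p) y = / PI * (PI ^ 2 * INR p * sinh y * bb y (INR p)).
Proof.
  intros Hp. unfold Dn.
  destruct (Z.eqb_spec (Z.of_nat p) 0) as [E|E]; [lia|].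
  rewrite <- INR_IZR_INZ. unfold bb.
  assert (HP := PI_RGT_0).
  assert (Hpr : 1 <= INR p) by (replace 1 with (INR 1) by reflexivity; apply le_INR; lia).
  assert (0 <= y ^ 2) by (rewrite <- Rsqr_pow2; apply Rle_0_sqr).
  assert (0 < PI ^ 2 * INR p ^ 2) by (apply Rmult_lt_0_compat; apply pow_lt; lra).
  field. repeat split; lra.
Qed.

Lemma lim_pos p y : 0 < y -> (1 <= p)%nat ->
  is_lim_seq (hilb_partial (Z.of_nat p) y) (Dn (Z.of_nat p) y).
Proof.
  intros Hy Hp. assert (HP := PI_RGT_0).
  set (K := 8 * INR p * (y * sinh y)).
  apply lim_bound with (c := / PI * (y * K) * 2) (N0 := Nat.max (2 * p) 1).
  intros N HN.
  assert (HN1 : (1 <= N)%nat) by lia.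
  assert (HNr : 1 <= INR N) by (replace 1 with (INR 1) by reflexivity; apply le_INR; lia).
  unfold hilb_partial. rewrite hp_eq by auto. rewrite Dn_val by auto.
  rewrite <- (is_RInt_unique _ _ _ _ (gg_int p y Hy Hp)).
  assert (EP : ex_RInt (PP p N) 0 y).
  { unfold PP. apply (RInt_S1 (fun m t => (fr (INR p - INR m) t - fr (INR p + INR m) t) / INR m)).
    intro m. apply RInt_div_minus; apply fr_ex; auto. }
  assert (EG : ex_RInt (gg p) 0 y) by (eexists; apply gg_int; auto).
  rewrite <- Rmult_minus_distr_l.
  replace (RInt (PP p N) 0 y - RInt (gg p) 0 y) with (RInt (fun t => PP p N t - gg p t) 0 y)
    by (exact (RInt_minus (V:=R_CompleteNormedModule) _ _ _ _ EP EG : RInt (fun t => PP p N t - gg p t) 0 y = RInt (PP p N) 0 y - RInt (gg p) 0 y)).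
  set (E' := fun t => if Req_EM_T t 0 then 0 else PP p N t - gg p t).
  rewrite (RInt_ext _ E').
  2: { intros x Hx. rewrite Rmin_left, Rmax_right in Hx by lra. unfold E'.
       destruct (Req_EM_T x 0); [lra|reflexivity]. }
  assert (EE : ex_RInt E' 0 y).
  { eapply exRext; [|apply (ex_RInt_minus (V:=R_NormedModule) _ _ _ _ EP EG)].
    intros x Hx. rewrite Rmin_left, Rmax_right in Hx by lra. unfold E'.
    destruct (Req_EM_T x 0); [lra|reflexivity]. }
  assert (HB : Rabs (RInt E' 0 y) <= (y - 0) * (K / INR N)).
  { apply abs_RInt_le_const; auto; [lra|]. intros t Ht. unfold E'.
    assert (0 <= K / INR N).
    { unfold K. apply Rdiv_le_0_compat; [|lra].
      assert (0 <= sinh y) by (left; apply sinh_pos; auto).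
      assert (0 <= INR p) by apply pos_INR. 
      apply Rmult_le_pos; [lra|]. apply Rmult_le_pos; lra. }
    destruct (Req_EM_T t 0). rewrite Rabs_R0; auto.
    apply PP_bound; auto; lia || lra. }
  rewrite Rabs_mult, Rabs_pos_eq by (left; apply Rinv_0_lt_compat; auto).
  assert (K / INR N <= K * 2 / (INR N + 1)).
  { assert (0 <= K).
    { unfold K. assert (0 <= sinh y) by (left; apply sinh_pos; auto).
      assert (0 <= INR p) by apply pos_INR. apply Rmult_le_pos; [lra|]. apply Rmult_le_pos; lra. }
    unfold Rdiv. rewrite Rmult_assoc. apply Rmult_le_compat_l; auto.
    apply (Rmult_le_reg_r (INR N * (INR N + 1))). nra.
    replace (/ INR N * (INR N * (INR N + 1))) with (INR N + 1) by (field; lra).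
    replace (2 * / (INR N + 1) * (INR N * (INR N + 1))) with (2 * INR N) by (field; lra). lra. }
  assert (0 < / PI) by (apply Rinv_0_lt_compat; auto).
  replace (/ PI * (y * K) * 2 / (INR N + 1)) with (/ PI * (y * (K * 2 / (INR N + 1)))) by (field; lra).
  apply Rmult_le_compat_l; [lra|].
  eapply Rle_trans; [exact HB|]. rewrite Rminus_0_r. apply Rmult_le_compat_l; lra.
Qed.

Lemma Cn_even j y : Cn (- j) y = Cn j y.
Proof. unfold Cn. rewrite opp_IZR. replace ((- IZR j) ^ 2) with (IZR j ^ 2) by ring. reflexivity. Qed.

Lemma hp_opp P y m : hilb_pair (- P) y m = - hilb_pair P y m.
Proof.
  unfold hilb_pair.
  replace (- P - Z.of_nat m)%Z with (- (P + Z.of_nat m))%Z by lia.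
  replace (- P + Z.of_nat m)%Z with (- (P - Z.of_nat m))%Z by lia.
  rewrite !Cn_even. unfold Rdiv. ring.
Qed.

Lemma hpart_opp P y N : hilb_partial (- P) y N = - hilb_partial P y N.
Proof.
  unfold hilb_partial. rewrite !sum_S1.
  rewrite (S1_ext _ (fun m => -1 * hilb_pair P y m)) by (intros; rewrite hp_opp; ring).
  rewrite S1_scal. ring.
Qed.

Lemma Dn_opp P y : Dn (- P) y = - Dn P y.
Proof.
  unfold Dn. destruct (Z.eqb_spec P 0) as [E|E].
  - subst. simpl. ring.
  - destruct (Z.eqb_spec (- P) 0) as [E2|E2]; [lia|].
    rewrite opp_IZR.
    assert (IZR P <> 0) by (apply not_0_IZR; auto).
    assert (HP := PI_RGT_0).
    replace ((- IZR P) ^ 2) with (IZR P ^ 2) by ring.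
    field. split; [|lra].
    assert (0 <= y ^ 2) by (rewrite <- Rsqr_pow2; apply Rle_0_sqr).
    assert (0 < IZR P ^ 2) by (rewrite <- Rsqr_pow2; apply Rlt_0_sqr; auto).
    assert (0 < PI ^ 2 * IZR P ^ 2) by (apply Rmult_lt_0_compat; [apply pow_lt|]; lra). lra.
Qed.

Theorem lemma3p14 (y : R) (hy : 0 < y) (n : Z) :
  ex_series (fun k : nat => Rabs (Cn (n - Z.of_nat (S k)) y / INR (S k))) /\
  ex_series (fun k : nat => Rabs (Cn (n + Z.of_nat (S k)) y / INR (S k))) /\
  is_lim_seq (hilb_partial n y) (Dn n y).
Proof.
  split; [|split].
  - apply (series_part y n (-1)); auto. intros k. rewrite minus_IZR, <- INR_IZR_INZ. ring.
  - apply (series_part y n 1); auto. intros k. rewrite plus_IZR, <- INR_IZR_INZ. ring.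
  - destruct n as [|q|q].
    + apply is_lim_seq_ext with (fun _ => 0).
      * intros N. unfold hilb_partial. rewrite sum_S1.
        rewrite (S1_ext _ (fun _ => 0 * 0)).
        -- rewrite S1_scal. ring.
        -- intros m _. unfold hilb_pair. replace (0 - Z.of_nat m)%Z with (- (0 + Z.of_nat m))%Z by lia.
           rewrite Cn_even. unfold Rdiv. ring.
      * unfold Dn. simpl. apply is_lim_seq_const.
    + replace (Z.pos q) with (Z.of_nat (Pos.to_nat q)) by apply positive_nat_Z.
      apply lim_pos; auto. lia.
    + replace (Z.neg q) with (- Z.of_nat (Pos.to_nat q))%Z by (rewrite positive_nat_Z; reflexivity).
      apply is_lim_seq_ext with (fun N => - hilb_partial (Z.of_nat (Pos.to_nat q)) y N).
      { intros N. rewrite hpart_opp. reflexivity. }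
      rewrite Dn_opp.
      apply (is_lim_seq_opp _ (Dn (Z.of_nat (Pos.to_nat q)) y)).
      apply lim_pos; auto. lia.
Qed.
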